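(* Let $m\ge 2$ inputs have positive sizes $w_1,\dots,w_m$ with $s=\sum_{i=1}^m w_i$, and let $q>0$ be the reducer capacity. Then every A2A mapping schema for these inputs with capacity $q$ has communication cost at least $\frac{s^2}{q}$ and uses at least $\frac{s^2}{q^2}$ reducers.
   Context: An A2A mapping schema for inputs $i_1,\dots,i_m$ with sizes $w_1,\dots,w_m$ and capacity $q$ is an assignment of the inputs to a collection of reducers (each input may be assigned to several reducers) such that (1) every reducer is assigned inputs whose total size is at most $q$, and (2) every pair of distinct inputs is assigned together to at least one reducer. The communication cost of a mapping schema is the sum, over all reducers, of the total size of the inputs assigned to that reducer (equivalently $\sum_i w_i\cdot r_i$, where $r_i$ is the number of reducers input $i$ is assigned to). *)

(* Defs.v *)
From mathcomp Require Import all_boot all_order all_algebra.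
Set Implicit Arguments. Unset Strict Implicit. Unset Printing Implicit Defensive.
Import Order.TTheory GRing.Theory Num.Theory.
Local Open Scope ring_scope.

(* Inputs are indexed by 'I_m, with sizes w : 'I_m -> R.
   A mapping schema is a finite list of reducers; each reducer is the set
   of inputs assigned to it. *)

Definition load (R : numDomainType) (m : nat) (w : 'I_m -> R) (r : {set 'I_m}) : R :=
  \sum_(i in r) w i.

Definition is_A2A_schema (R : numDomainType) (m : nat) (w : 'I_m -> R) (q : R)
    (rs : seq {set 'I_m}) : Prop :=
  (forall r, r \in rs -> load w r <= q) /\
  (forall i j : 'I_m, i != j -> exists2 r, r \in rs & (i \in r) && (j \in r)).

Definition comm_cost (R : numDomainType) (m : nat) (w : 'I_m -> R)
    (rs : seq {set 'I_m}) : R :=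
  \sum_(r <- rs) load w r.

(* Main.v *)
Require Import Defs.
From mathcomp Require Import all_boot all_order all_algebra.
Import Order.TTheory GRing.Theory Num.Theory.
Local Open Scope ring_scope.

Lemma sum_const_seq (R : realFieldType) (T : Type) (rs : seq T) (q : R) :
  \sum_(r <- rs) q = (size rs)%:R * q.
Proof.
elim: rs => [|a l IH]; first by rewrite big_nil mul0r.
by rewrite big_cons IH /= -nat1r mulrDl mul1r.
Qed.

Theorem theorem3 (R : realFieldType) (m : nat) (w : 'I_m -> R) (q : R)
    (rs : seq {set 'I_m}) :
  (2 <= m)%N ->
  (forall i, 0 < w i) ->
  0 < q ->
  is_A2A_schema w q rs ->
  let s := \sum_(i < m) w i in
  s ^+ 2 / q <= comm_cost w rs /\ s ^+ 2 / q ^+ 2 <= (size rs)%:R.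
Proof.
move=> m2 wpos qpos [Hload Hpair] s.
have loadE r : load w r = \sum_j (if j \in r then w j else 0).
  by rewrite /load big_mkcond.
pose c (i : 'I_m) : R := \sum_(r <- rs | i \in r) 1.
have key i : s <= q * c i.
  have -> : q * c i = \sum_(r <- rs | i \in r) q.
    by rewrite /c mulr_sumr; apply: eq_bigr => r _; rewrite mulr1.
  apply: (@le_trans _ _ (\sum_(r <- rs | i \in r) load w r)); last first.
    rewrite big_seq_cond [X in _ <= X]big_seq_cond.
    by apply: ler_sum => r /andP[rin _]; apply: Hload.
  under eq_bigr do rewrite loadE.
  rewrite exchange_big /s; apply: ler_sum => j _.
  have [r0 r0in /andP[ir0 jr0]] : exists2 r, r \in rs & (i \in r) && (j \in r).
    case: (eqVneq i j) => [<-|ij]; last exact: Hpair.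
    have [k ik] : exists k : 'I_m, i != k.
      case: (eqVneq i (Ordinal (ltnW m2))) => [->|h]; last by exists (Ordinal (ltnW m2)).
      by exists (Ordinal m2); apply/eqP => /(congr1 val).
    have [r rin /andP[h1 _]] := Hpair i k ik.
    by exists r => //; rewrite h1.
  rewrite (big_rem r0) //= ir0 jr0 lerDl.
  by apply: sumr_ge0 => r _; case: ifP => // _; apply: ltW.
have costE : comm_cost w rs = \sum_j w j * c j.
  rewrite /comm_cost; under eq_bigr do rewrite loadE.
  rewrite exchange_big; apply: eq_bigr => j _.
  rewrite /c mulr_sumr [RHS]big_mkcond; apply: eq_bigr => r _.
  by case: ifP => _; rewrite ?mulr1.
have cost1 : s ^+ 2 / q <= comm_cost w rs.
  rewrite costE expr2 -mulrA /s mulr_suml; apply: ler_sum => j _.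
  rewrite -/s; apply: ler_wpM2l; first exact: ltW.
  by rewrite ler_pdivrMr // mulrC.
split=> //.
have cost2 : comm_cost w rs <= (size rs)%:R * q.
  rewrite -sum_const_seq /comm_cost big_seq [X in _ <= X]big_seq.
  by apply: ler_sum => r rin; apply: Hload.
rewrite expr2 invfM mulrA ler_pdivrMr //.
exact: le_trans cost1 cost2.
Qed.
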